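(* Let $m,n$ be positive integers and let $\lambda,\mu,\nu$ be partitions of the same positive integer $N$ with $\ell(\mu)\le m$, $\ell(\nu)\le n$, $\ell(\lambda)\le mn$. Then $\mathbf b^{m,n}(\lambda,\mu,\nu;Id)=\mathbf 0$ if and only if $$\mu_u=\lambda_u+\sum_{i=m+(u-1)(n-1)+1}^{m+u(n-1)}\lambda_i\quad(u=1,\dots,m),\qquad \nu_1=\sum_{i=1}^m\lambda_i,\qquad \nu_v=\sum_{i=0}^{m-1}\lambda_{m+(n-1)i+v-1}\quad(v=2,\dots,n).$$
   Context: Partitions are padded with zeros: $\lambda=(\lambda_1,\dots,\lambda_{mn})$, $\mu=(\mu_1,\dots,\mu_m)$, $\nu=(\nu_1,\dots,\nu_n)$. Variables $s_0,\dots,s_{m-1},t_1,\dots,t_{n-2}$; $T=t_1\cdots t_{n-2}$. Monomials $x_i=s_1\cdots s_iT^i$ ($1\le i\le m-1$), $y_j=s_0s_1\cdots s_{m-1}T^{m-1}t_1\cdots t_{j-1}$ ($1\le j\le n-1$). For a monomial $M$, $e(M)\in\mathbb Z^{m+n-2}$ is its exponent vector with coordinates ordered $s_0,\dots,s_{m-1},t_1,\dots,t_{n-2}$. Let $(z_1,\dots,z_{mn})=(1,x_1,\dots,x_{m-1},y_1,\dots,y_{n-1},x_1y_1,\dots,x_1y_{n-1},x_2y_1,\dots,x_{m-1}y_{n-1})$. Then $\mathbf b^{m,n}(\lambda,\mu,\nu;Id)=e\big(\prod_{i=1}^{m-1}x_i^{\mu_{i+1}}\prod_{j=1}^{n-1}y_j^{\nu_{j+1}}\big)-e\big(\prod_{i=1}^{mn}z_i^{\lambda_i}\big)$.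 *)

(* Defs.v *)
From mathcomp Require Import all_boot all_order all_algebra.
Set Implicit Arguments. Unset Strict Implicit. Unset Printing Implicit Defensive.
Import GRing.Theory.

Definition is_partition_of (N : nat) (p : seq nat) : bool :=
  [&& sorted geq p, all (fun x => 0 < x) p & sumn p == N].

Definition part (p : seq nat) (i : nat) : nat := nth 0 p i.-1.

(* Monomials in s_0..s_{m-1}, t_1..t_{n-2} are represented by their exponent
   vectors; coordinate k < m is s_k, coordinate k >= m is t_{k-m+1}.
   Multiplication of monomials is addition of exponent vectors, so the
   exponent map e is the identity on this representation. *)
Definition expvec (m n : nat) := 'rV[int]_(m + (n - 2)).

Local Open Scope ring_scope.

Definition var_s (m n a : nat) : expvec m n :=
  \row_(k < m + (n - 2)) ((k == a :> nat) : nat)%:Z.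
Definition var_t (m n l : nat) : expvec m n :=
  \row_(k < m + (n - 2)) ((k == m + l.-1 :> nat) : nat)%:Z.

Definition Tmon (m n : nat) : expvec m n := \sum_(1 <= l < n.-1) var_t m n l.

Definition xmon (m n i : nat) : expvec m n :=
  \sum_(1 <= a < i.+1) var_s m n a + Tmon m n *+ i.

Definition ymon (m n j : nat) : expvec m n :=
  \sum_(0 <= a < m) var_s m n a + Tmon m n *+ (m - 1)
  + \sum_(1 <= l < j) var_t m n l.

Definition zseq (m n : nat) : seq (expvec m n) :=
  0 :: [seq xmon m n i | i <- iota 1 m.-1]
    ++ [seq ymon m n j | j <- iota 1 n.-1]
    ++ [seq xmon m n i + ymon m n j | i <- iota 1 m.-1, j <- iota 1 n.-1].

Definition zmon (m n i : nat) : expvec m n := nth 0 (zseq m n) i.-1.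

Definition bvec (m n : nat) (lam mu nu : seq nat) : expvec m n :=
  (\sum_(1 <= i < m) xmon m n i *+ part mu i.+1
   + \sum_(1 <= j < n) ymon m n j *+ part nu j.+1)
  - \sum_(1 <= i < (m * n).+1) zmon m n i *+ part lam i.

(* Main.v *)
Require Import Defs.
From mathcomp Require Import all_boot all_order all_algebra.
From mathcomp Require Import zify ring lra.
Set Implicit Arguments. Unset Strict Implicit. Unset Printing Implicit Defensive.
Import GRing.Theory Num.Theory.
Module Aux.
Local Open Scope ring_scope.


Lemma mxMn p q (A : 'M[int]_(p,q)) i j k : (A *+ k) i j = A i j *+ k.
Proof. elim: k => [|k IH]; first by rewrite !mulr0n mxE. by rewrite !mulrS mxE IH. Qed.

Lemma mxMz p q (A : 'M[int]_(p,q)) i j z : (A *~ z) i j = A i j * z.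
Proof.
have P x (k : nat) : x * Posz k = x *+ k by rewrite -mulrzz.
case: z => k; first by rewrite P; exact: mxMn.
by rewrite NegzE mulrNz mxE mulrN P; congr (- _); exact: mxMn.
Qed.

Lemma sum_ind (lo hi k : nat) :
  \sum_(lo <= a < hi) ((k == a : bool) : nat)%:Z = ((lo <= k < hi)%N : nat)%:Z.
Proof.
case: (boolP (lo <= k < hi)%N) => H.
  rewrite (bigD1_seq k) ?mem_index_iota ?iota_uniq //= eqxx big1 ?addr0 //.
  by move=> i /negPf; rewrite eq_sym => ->.
rewrite big1_seq // => i /andP[_]; rewrite mem_index_iota => Hi.
case: eqP => // E; subst; by rewrite Hi in H.
Qed.

Lemma sum_delta (lo hi c : nat) (F : nat -> int) : (lo <= c < hi)%N ->
  \sum_(lo <= a < hi) (if a == c then F a else 0) = F c.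
Proof.
move=> H; rewrite (bigD1_seq c) ?mem_index_iota ?iota_uniq //= eqxx big1 ?addr0 //.
by move=> i /negPf ->.
Qed.



Ltac beq := apply/idP/idP => /eqP ?; apply/eqP; lia.

Lemma Tmon_e m n (k : 'I_(m + (n-2))) : Tmon m n 0 k = ((m <= k)%N : nat)%:Z.
Proof.
rewrite /Tmon summxE.
under eq_bigr => l _ do rewrite mxE.
have Hk := ltn_ord k.
case: (leqP m k) => Hm.
  transitivity (\sum_(1 <= l < n.-1) ((k - m + 1 == l)%N : nat)%:Z).
    apply: eq_big_nat => l /andP[H1 H2].
    have -> : (k == m + l.-1 :> nat) = (k - m + 1 == l)%N by beq.
    by [].
  rewrite sum_ind; congr (Posz (nat_of_bool _)); apply/idP; lia.
rewrite big1_seq // => l /andP[_]; rewrite mem_index_iota => Hl.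
have -> : (k == m + l.-1 :> nat) = false by apply/negP => /eqP; lia.
by [].
Qed.

Lemma xmon_s m n i (k : 'I_(m + (n-2))) : (k < m)%N ->
  xmon m n i 0 k = ((1 <= k <= i)%N : nat)%:Z.
Proof.
move=> Hk; rewrite /xmon mxE mxMn Tmon_e summxE.
under eq_bigr => l _ do rewrite mxE.
rewrite sum_ind.
have -> : (m <= k)%N = false by lia.
by rewrite mul0rn addr0.
Qed.

Lemma xmon_t m n i (k : 'I_(m + (n-2))) : (m <= k)%N -> (i < m)%N ->
  xmon m n i 0 k = i%:Z.
Proof.
move=> Hk Hi; rewrite /xmon mxE mxMn Tmon_e summxE.
under eq_bigr => l _ do rewrite mxE.
rewrite sum_ind Hk.
have -> : (1 <= k < i.+1)%N = false by lia.
by rewrite add0r /= natz.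
Qed.

Lemma ymon_s m n j (k : 'I_(m + (n-2))) : (k < m)%N -> ymon m n j 0 k = 1.
Proof.
move=> Hk; rewrite /ymon !mxE mxMn Tmon_e !summxE.
under eq_bigr => l _ do rewrite mxE.
under [X in _ + X]eq_bigr => l _ do rewrite mxE.
rewrite sum_ind.
have -> : (m <= k)%N = false by lia.
have -> : (0 <= k < m)%N = true by lia.
rewrite mul0rn addr0 big1_seq ?addr0 // => l /andP[_]; rewrite mem_index_iota => Hl.
have -> : (k == m + l.-1 :> nat) = false by apply/negP => /eqP; lia.
by [].
Qed.

Lemma ymon_t m n j (k : 'I_(m + (n-2))) : (m <= k)%N ->
  ymon m n j 0 k = (m - 1)%:Z + ((k - m + 2 <= j)%N : nat)%:Z.
Proof.
move=> Hk; rewrite /ymon !mxE mxMn Tmon_e !summxE.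
under eq_bigr => l _ do rewrite mxE.
under [X in _ + X]eq_bigr => l _ do rewrite mxE.
rewrite sum_ind Hk.
have -> : (0 <= k < m)%N = false by lia.
rewrite add0r /= natz; congr (_ + _).
transitivity (\sum_(1 <= l < j) ((k - m + 1 == l)%N : nat)%:Z).
  apply: eq_big_nat => l /andP[H1 H2].
  have -> : (k == m + l.-1 :> nat) = (k - m + 1 == l)%N by beq.
  by [].
rewrite sum_ind; congr (Posz (nat_of_bool _)); lia.
Qed.



Lemma tele (lo hi : nat) (F : nat -> int) :
  (forall c, (lo <= c < hi)%N -> \sum_(lo <= i < hi) ((c <= i)%N : nat)%:Z * F i = 0) ->
  forall i, (lo <= i < hi)%N -> F i = 0.
Proof.
move=> H i Hi.
have S1 : \sum_(lo <= j < hi) ((i.+1 <= j)%N : nat)%:Z * F j = 0.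
  case: (ltnP i.+1 hi) => Hh; first by apply: H; lia.
  rewrite big1_seq // => j /andP[_]; rewrite mem_index_iota => Hj.
  have -> : (i.+1 <= j)%N = false by lia.
  by rewrite mul0r.
suff -> : F i = \sum_(lo <= j < hi) ((i <= j)%N : nat)%:Z * F j
   - \sum_(lo <= j < hi) ((i.+1 <= j)%N : nat)%:Z * F j by rewrite H // S1 subr0.
rewrite -sumrB -(@sum_delta lo hi i F Hi); apply: eq_big_nat => j Hj.
case: (eqVneq j i) => [->|Hne]; first by rewrite leqnn ltnn mul1r mul0r subr0.

have -> : (i <= j)%N = (i.+1 <= j)%N by apply/idP/idP; move/eqP: Hne; lia.
by rewrite subrr.
Qed.

Lemma indep m n (a b : nat -> int) : (0 < m)%N -> (0 < n)%N ->
  \sum_(1 <= i < m) xmon m n i *~ a i + \sum_(1 <= j < n) ymon m n j *~ b j = 0 ->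
  (forall i, (1 <= i < m)%N -> a i = 0) /\ (forall j, (1 <= j < n)%N -> b j = 0).
Proof.
move=> hm hn H.
have E k (Hk : (k < m + (n-2))%N) :
  \sum_(1 <= i < m) xmon m n i 0 (Ordinal Hk) * a i
  + \sum_(1 <= j < n) ymon m n j 0 (Ordinal Hk) * b j = 0.
  have := congr1 (fun v : expvec m n => v 0 (Ordinal Hk)) H.
  rewrite /= !mxE !summxE => HH; etransitivity; last exact HH.
  by congr (_ + _); apply: eq_bigr => i _; rewrite mxMz.
have Hk0 : (0 < m + (n-2))%N by lia.
have Sb : \sum_(1 <= j < n) b j = 0.
  have := E 0%N Hk0.
  rewrite big1_seq ?add0r; last first.
    by move=> i _; rewrite xmon_s //= mul0r.
  move=> HH; rewrite -[RHS]HH; apply: eq_bigr => j _; by rewrite ymon_s // mul1r.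
have Ha : forall i, (1 <= i < m)%N -> a i = 0.
  apply: tele => c Hc.
  have Hk : (c < m + (n-2))%N by lia.
  rewrite -[RHS](E c Hk).
  have -> : \sum_(1 <= j < n) ymon m n j 0 (Ordinal Hk) * b j = 0.
    rewrite -[RHS]Sb; apply: eq_bigr => j _; rewrite ymon_s ?mul1r //=; lia.
  rewrite addr0; apply: eq_big_nat => i Hi; rewrite xmon_s /=; last by lia.
  by have -> : (1 <= c)%N by lia.
split => //.
apply: tele => c Hc.
case: (ltnP 1 c) => Hc1; last first.
  rewrite -[RHS]Sb; apply: eq_big_nat => j Hj.
  have -> : (c <= j)%N by lia.
  by rewrite mul1r.
have Hk : (m + c - 2 < m + (n-2))%N by lia.
rewrite -[RHS](E _ Hk).
rewrite [X in _ = X + _]big1_seq ?add0r; last first.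
  by move=> i /andP[_]; rewrite mem_index_iota => Hi; rewrite Ha ?mulr0 //; lia.
have -> : \sum_(1 <= j < n) ymon m n j 0 (Ordinal Hk) * b j =
   \sum_(1 <= j < n) ((m - 1)%:Z * b j + ((c <= j)%N : nat)%:Z * b j).
  apply: eq_bigr => j _; rewrite ymon_t /=; last by lia.
  by rewrite mulrDl; have -> : (m + c - 2 - m + 2 = c)%N by lia.
by rewrite big_split /= -mulr_sumr Sb mulr0 add0r.
Qed.



Section WS.
Variable V : zmodType.

Fixpoint wsum (s : seq V) (f : nat -> nat) : V :=
  if s is a :: s' then a *+ f 0%N + wsum s' (fun k => f k.+1) else 0.

Lemma wsum_ext s f g : (forall k, f k = g k) -> wsum s f = wsum s g.
Proof.
elim: s f g => [|a s IH] f g H //=.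
by rewrite H (IH _ (fun k => g k.+1)).
Qed.

Lemma wsum_nth s L :
  \sum_(1 <= i < (size s).+1) s`_(i.-1) *+ L i = wsum s (fun k => L k.+1).
Proof.
elim: s L => [|a s IH] L; first by rewrite big_geq.
rewrite /= big_nat_recl //=; congr (_ + _).
rewrite -(IH (fun k => L k.+1)); apply: eq_big_nat => i /andP[Hi _].
by case: i Hi.
Qed.

Lemma wsum_cat s1 s2 f :
  wsum (s1 ++ s2) f = wsum s1 f + wsum s2 (fun k => f (size s1 + k)%N).
Proof.
elim: s1 f => [|a s IH] f /=; first by rewrite add0r; apply: wsum_ext.
by rewrite IH addrA.
Qed.

Lemma wsum_iota (g : nat -> V) a p f :
  wsum [seq g i | i <- iota a p] f = \sum_(0 <= i < p) g (a + i)%N *+ f i.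
Proof.
elim: p a f => [|p IH] a f /=; first by rewrite big_geq.
rewrite big_nat_recl // IH addn0; congr (_ + _).
by apply: eq_bigr => i _; rewrite addSnnS.
Qed.

Lemma wsum_allp (h : nat -> nat -> V) a b p q f :
  wsum [seq h i j | i <- iota a p, j <- iota b q] f =
  \sum_(0 <= i < p) \sum_(0 <= j < q) h (a + i)%N (b + j)%N *+ f (i * q + j)%N.
Proof.
elim: p a f => [|p IH] a f /=; first by rewrite big_geq.
rewrite wsum_cat wsum_iota size_map size_iota IH big_nat_recl // addn0.
congr (_ + _).
apply: eq_bigr => i _; apply: eq_bigr => j _.
by rewrite addSnnS mulSn addnA.
Qed.

Definition zs (z0 : V) (x y : nat -> V) (h : nat -> nat -> V) (m n : nat) : seq V :=
  z0 :: [seq x i | i <- iota 1 m.-1] ++ [seq y j | j <- iota 1 n.-1]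
    ++ [seq h i j | i <- iota 1 m.-1, j <- iota 1 n.-1].

Lemma zsG m n z0 x y h L : (0 < m)%N -> (0 < n)%N ->
  \sum_(1 <= i < (m * n).+1) (zs z0 x y h m n)`_(i.-1) *+ L i =
  z0 *+ L 1%N + \sum_(1 <= i < m) x i *+ L i.+1
  + \sum_(1 <= j < n) y j *+ L (m + j)%N
  + \sum_(1 <= i < m) \sum_(1 <= j < n) h i j *+ L (m + i * (n - 1) + j)%N.
Proof.
case: m => // m; case: n => // n _ _.
have Hs : size (zs z0 x y h m.+1 n.+1) = (m.+1 * n.+1)%N.
  rewrite /zs /= !size_cat !size_map size_allpairs !size_iota; lia.
rewrite -{1}Hs wsum_nth /= wsum_cat wsum_iota wsum_cat wsum_iota wsum_allp
  !size_map !size_iota.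
rewrite !big_add1 /= -!addrA; congr (_ + _); congr (_ + _).
congr (_ + _).
  by apply: eq_bigr => j _; congr (_ *+ L _); lia.
apply: eq_bigr => i _; rewrite big_add1 /=; apply: eq_bigr => j _; congr (_ *+ L _); lia.
Qed.
End WS.



Definition PA m n lam i :=
  (part lam i.+1 + \sum_(1 <= j < n) part lam (m + i * (n - 1) + j))%N.
Definition PB m n lam j :=
  (part lam (m + j) + \sum_(1 <= i < m) part lam (m + i * (n - 1) + j))%N.

Lemma zseqE m n : zseq m n =
  zs 0 (xmon m n) (ymon m n) (fun i j => xmon m n i + ymon m n j) m n.
Proof. by []. Qed.

Lemma grp (V : zmodType) (a1 b1 a2 b2 a3 b3 : V) :
  a1 + b1 - (a2 + b2 + (a3 + b3)) = (a1 - (a2 + a3)) + (b1 - (b2 + b3)).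
Proof.
rewrite !opprD !addrA; congr (_ + _).
rewrite -!addrA; congr (_ + _).
by rewrite addrCA; congr (_ + _); rewrite addrA addrC.
Qed.

Lemma mulrzP (V : zmodType) (x : V) (k : nat) : x *~ Posz k = x *+ k.
Proof. by []. Qed.

Lemma step1 m n lam mu nu : (0 < m)%N -> (0 < n)%N ->
  bvec m n lam mu nu =
  \sum_(1 <= i < m) xmon m n i *~ ((part mu i.+1)%:Z - (PA m n lam i)%:Z)
  + \sum_(1 <= j < n) ymon m n j *~ ((part nu j.+1)%:Z - (PB m n lam j)%:Z).
Proof.
move=> hm hn.
rewrite /bvec /zmon zseqE zsG // mul0rn add0r.
have eX i : xmon m n i *~ ((part mu i.+1)%:Z - (PA m n lam i)%:Z) =
   xmon m n i *+ part mu i.+1 - (xmon m n i *+ part lam i.+1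
     + \sum_(1 <= j < n) xmon m n i *+ part lam (m + i * (n - 1) + j)).
  by rewrite mulrzBr /PA; rewrite !mulrzP mulrnDr sumrMnr.
have eY j : ymon m n j *~ ((part nu j.+1)%:Z - (PB m n lam j)%:Z) =
   ymon m n j *+ part nu j.+1 - (ymon m n j *+ part lam (m + j)
     + \sum_(1 <= i < m) ymon m n j *+ part lam (m + i * (n - 1) + j)).
  by rewrite mulrzBr /PB; rewrite !mulrzP mulrnDr sumrMnr.
rewrite (eq_bigr _ (fun i _ => eX i)) (eq_bigr _ (fun j _ => eY j)).
rewrite !sumrB !big_split /=.
have -> : \sum_(1 <= i < m) \sum_(1 <= j < n)
         (xmon m n i + ymon m n j) *+ part lam (m + i * (n - 1) + j) =
   \sum_(1 <= i < m) \sum_(1 <= j < n) xmon m n i *+ part lam (m + i * (n - 1) + j)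
   + \sum_(1 <= j < n) \sum_(1 <= i < m) ymon m n j *+ part lam (m + i * (n - 1) + j).
  rewrite [X in _ = _ + X]exchange_big /= -big_split /=; apply: eq_bigr => i _.
  by rewrite -big_split /=; apply: eq_bigr => j _; rewrite mulrnDl.
exact: grp.
Qed.

End Aux.
Import Aux.

Lemma sum_part p k : size p <= k -> \sum_(1 <= i < k.+1) part p i = sumn p.
Proof.
elim: p k => [|a p IH] k Hk.
  by rewrite big1 // => i _; rewrite /part nth_nil.
case: k Hk => // k Hk.
rewrite big_nat_recl //= -(IH k) //; congr (_ + _).
by apply: eq_big_nat => i /andP[Hi _]; case: i Hi.
Qed.

Lemma splitN (F : nat -> nat) k : 0 < k ->
  \sum_(1 <= u < k.+1) F u = F 1 + \sum_(1 <= i < k) F i.+1.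
Proof. by move=> Hk; rewrite big_nat_recl. Qed.

Lemma ones m n lam : 0 < m -> 0 < n ->
  \sum_(1 <= i < (m * n).+1) part lam i =
  part lam 1 + \sum_(1 <= i < m) part lam i.+1 + \sum_(1 <= j < n) part lam (m + j)
  + \sum_(1 <= i < m) \sum_(1 <= j < n) part lam (m + i * (n - 1) + j).
Proof.
move=> hm hn.
have := @zsG int m n 1 (fun _ => 1) (fun _ => 1) (fun _ _ => 1) (part lam) hm hn.
set s := zs _ _ _ _ _ _.
have Hall : all (fun v : int => v == 1%R) s.
  apply/allP => v; rewrite /s /zs inE !mem_cat.
  case/orP => [/eqP -> //|]; case/orP => [/mapP [? _ ->] //|].
  case/orP => [/mapP [? _ ->] //|/allpairsP [? [_ _ ->]] //].
have Hsz : size s = m * n.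
  rewrite /s /zs /= !size_cat !size_map size_allpairs !size_iota.
  case: m hm {Hall s} => // m _; case: n hn => // n _ /=; lia.
rewrite (eq_big_nat _ _ (F2 := fun i => ((part lam i)%:R : int))); last first.
  move=> i Hi; move/all_nthP: Hall => /(_ 0 i.-1); rewrite Hsz => H.
  by rewrite (eqP (H _)) //; lia.
move=> H; apply/eqP; rewrite -(eqr_nat int) !natrD !natr_sum H.
apply/eqP; congr (_ + _)%R; apply: eq_bigr => i _; by rewrite natr_sum.
Qed.

Lemma reidx (F : nat -> nat) m n u : 0 < u -> 0 < n ->
  \sum_(m + (u - 1) * (n - 1) + 1 <= i < (m + u * (n - 1)).+1) F i =
  \sum_(1 <= j < n) F (m + (u - 1) * (n - 1) + j).
Proof.
case: u => // u; case: n => // n _ _.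
rewrite !subn1 /= addnC big_addn.
have -> : (m + u.+1 * n).+1 - (m + u * n) = n.+1 by rewrite mulSn; lia.
by apply: eq_bigr => i _; rewrite addnC.
Qed.

Lemma reidxB (F : nat -> nat) m n j : 0 < m ->
  \sum_(0 <= i < m) F (m + (n - 1) * i + j.+1 - 1) =
  F (m + j) + \sum_(1 <= i < m) F (m + i * (n - 1) + j).
Proof.
case: m => // m _.
rewrite big_nat_recl // big_add1 /=; congr (F _ + _); first by lia.
by apply: eq_bigr => i _; congr F; nia.
Qed.


Theorem mainTheorem3 (m n N : nat) (lam mu nu : seq nat) :
  0 < m -> 0 < n -> 0 < N ->
  is_partition_of N lam -> is_partition_of N mu -> is_partition_of N nu ->
  size mu <= m -> size nu <= n -> size lam <= m * n ->
  (bvec m n lam mu nu = 0%R <->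
   [/\ (forall u, 1 <= u <= m ->
          part mu u = part lam u
            + \sum_(m + (u - 1) * (n - 1) + 1 <= i < (m + u * (n - 1)).+1) part lam i),
       part nu 1 = \sum_(1 <= i < m.+1) part lam i
     & (forall v, 2 <= v <= n ->
          part nu v = \sum_(0 <= i < m) part lam (m + (n - 1) * i + v - 1))]).
Proof.
move=> hm hn _ /and3P[_ _ /eqP Sl] /and3P[_ _ /eqP Sm] /and3P[_ _ /eqP Sn] sm sn sl.
have Nl := sum_part sl; rewrite Sl ones // in Nl.
have Nm := sum_part sm; rewrite Sm splitN // in Nm.
have Nn := sum_part sn; rewrite Sn splitN // in Nn.
set P := \sum_(1 <= i < m) part lam i.+1 in Nl.
set Q := \sum_(1 <= j < n) part lam (m + j) in Nl.
set R := \sum_(1 <= i < m) \sum_(1 <= j < n) part lam (m + i * (n - 1) + j) in Nl.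
have SPA : \sum_(1 <= i < m) PA m n lam i = P + R by rewrite big_split.
have SPB : \sum_(1 <= j < n) PB m n lam j = Q + R.
  by rewrite big_split /= [X in _ + X = _]exchange_big.
rewrite step1 //; split.
- move=> H0.
  have [Ha Hb] := indep hm hn H0.
  have HA i : 1 <= i < m -> part mu i.+1 = PA m n lam i.
    by move=> Hi; have := Ha i Hi; lia.
  have HB j : 1 <= j < n -> part nu j.+1 = PB m n lam j.
    by move=> Hj; have := Hb j Hj; lia.
  rewrite (eq_big_nat _ _ HA) SPA in Nm.
  rewrite (eq_big_nat _ _ HB) SPB in Nn.
  split.
  + move=> u Hu; rewrite reidx //; last by lia.
    case: u Hu => // [[_|u Hu]].
      have -> : \sum_(1 <= j < n) part lam (m + (1 - 1) * (n - 1) + j) = Q.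
        by apply: eq_bigr => j _; rewrite subnn mul0n addn0.
      lia.
    rewrite HA; last by lia.
    by rewrite /PA subn1 /=.
  + rewrite splitN //; lia.
  + move=> v Hv; case: v Hv => // v Hv.
    rewrite reidxB // HB //; lia.
- case=> C1 C2 C3.
  rewrite big1_seq ?GRing.add0r ?big1_seq //.
    move=> j /andP[_]; rewrite mem_index_iota => Hj.
    rewrite C3; last by lia.
    rewrite reidxB //.
    by rewrite /PB GRing.subrr mulr0z.
  move=> i /andP[_]; rewrite mem_index_iota => Hi.
  rewrite C1; last by lia.
  rewrite reidx; [|lia|lia].
  by rewrite /PA subn1 /= GRing.subrr mulr0z.
Qed.
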